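(* Let $(k_1,\dots,k_n) \in \mathbb{Z}_{\geq 1}^n$ and $i \in \mathbb{Z}_{\geq 2}$. Then $$\dim_{\mathbb{F}_2} \widetilde{\mathrm{Gov}}(V_{[k_1,\dots,k_n]}, i) = (k_1+\dots+k_n)\binom{n-1}{i-1} - \binom{n}{i}.$$
   Context: Let $m = k_1+\dots+k_n$, $V_{[k_1,\dots,k_n]} = \mathbb{F}_2^m$ with basis $e_1,\dots,e_m$ and dual basis $\chi_1,\dots,\chi_m$. For $h \in [n]$ let $f(h) = \{k_1+\dots+k_{h-1}+1,\dots,k_1+\dots+k_h\}$ (the $h$-th block), and for a subset $T \subseteq [m]$ put $f(T) = T$. For $A \subseteq [n]$ with $\#A = i \geq 2$, $x \in A$ and $T \subseteq f(x)$, regard $T$ as a new symbol and set $$\widetilde{\phi}_{(A,T)} = \sum_{\tau} \Big(\sum_{y_1 \in f(\tau(1))}\chi_{y_1}\Big)\otimes\cdots\otimes\Big(\sum_{y_i \in f(\tau(i))}\chi_{y_i}\Big),$$ the sum over bijections $\tau:\{1,\dots,i\} \to (A\setminus\{x\})\cup\{T\}$ with $\tau(i-1) = T$ or $\tau(i) = T$; here $\psi_1\otimes\cdots\otimes\psi_i$ denotes the multilinear map $(\sigma_1,\dots,\sigma_i)\mapsto\prod_s\psi_s(\sigma_s)$ on $(\mathbb{F}_2^m)^i$. $\widetilde{\mathrm{Gov}}(V_{[k_1,\dots,k_n]}, i)$ is the span of all $\widetilde{\phi}_{(A,T)}$ with $A \subseteq [n]$, $\#A = i$, $x \in A$, $T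 \subseteq f(x)$. *)

(* Defs.v *)
From HB Require Import structures.
From mathcomp Require Import all_boot all_order all_algebra.
Unset Strict Implicit.
Unset Printing Implicit Defensive.
Import GRing.Theory.
Local Open Scope ring_scope.

(* m = k_1 + ... + k_n ; blocks are 0-indexed: block h (h : 'I_n) is
   { j : 'I_m | k_0 + ... + k_{h-1} <= j < k_0 + ... + k_h }. *)
Definition msum {n : nat} (k : 'I_n -> nat) : nat := (\sum_(l < n) k l)%N.

Definition block {n : nat} (k : 'I_n -> nat) (h : 'I_n) : {set 'I_(msum k)} :=
  [set j : 'I_(msum k) | ((\sum_(l < n | (l < h)%N) k l)%N <= j)%N
                         && (j < (\sum_(l < n | (l <= h)%N) k l)%N)%N].

(* Labels: Some h stands for the block index h, None for the new symbol T. *)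
Definition lblock {n : nat} (k : 'I_n -> nat) (T : {set 'I_(msum k)})
  (a : option 'I_n) : {set 'I_(msum k)} :=
  if a is Some h then block k h else T.

Definition chiS {m : nat} (B : {set 'I_m}) (v : 'rV['F_2]_m) : 'F_2 :=
  \sum_(y in B) v ord0 y.

(* Multilinear maps (F_2^m)^i -> F_2, as functions on i-tuples of vectors. *)
Definition mlmap (m i : nat) := {ffun {ffun 'I_i -> 'rV['F_2]_m} -> ('F_2)^o}.

(* bijections tau : {1..i} -> (A \ {x}) u {T} with T in position i-1 or i
   (0-indexed positions i-2, i-1) *)
Definition good_tau {n i : nat} (A : {set 'I_n}) (x : 'I_n)
  (tau : {ffun 'I_i -> option 'I_n}) : bool :=
  [&& injectiveb tau,
      [set tau p | p : 'I_i] == (None |: (Some @: (A :\ x))) &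
      [forall p : 'I_i, (tau p == None) ==> (i.-2 <= p)%N]].

Definition phi_tilde {n : nat} (k : 'I_n -> nat) (i : nat)
  (A : {set 'I_n}) (x : 'I_n) (T : {set 'I_(msum k)}) : mlmap (msum k) i :=
  [ffun sigma : {ffun 'I_i -> 'rV['F_2]_(msum k)} =>
     \sum_(tau : {ffun 'I_i -> option 'I_n} | good_tau A x tau)
        \prod_(s < i) chiS (lblock k T (tau s)) (sigma s)].

Definition Gov_tilde {n : nat} (k : 'I_n -> nat) (i : nat)
  : {vspace mlmap (msum k) i} :=
  (\sum_(A : {set 'I_n} | #|A| == i)
     \sum_(x in A)
       \sum_(T : {set 'I_(msum k)} | T \subset block k x)
         <[phi_tilde k i A x T]>)%VS.

(* Main.v *)
Require Import Defs.
From HB Require Import structures.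
From mathcomp Require Import all_boot all_order all_algebra.
From mathcomp Require Import zify.
Local Open Scope ring_scope.
Import GRing.Theory.

Section Main.
Variables (n : nat) (k : 'I_n -> nat) (i : nat).
Hypothesis kpos : forall l, (0 < k l)%N.
Hypothesis i2 : (2 <= i)%N.
Variables (hd : 'I_n) (yd : 'I_(msum k)).
Local Notation m := (msum k).

Definition Slt (h : 'I_n) := (\sum_(l < n | (l < h)%N) k l)%N.
Definition Sle (h : 'I_n) := (\sum_(l < n | (l <= h)%N) k l)%N.

Lemma blockE h (y : 'I_m) : (y \in block k h) = (Slt h <= y < Sle h)%N.
Proof. by rewrite inE. Qed.

Lemma SleE h : Sle h = (Slt h + k h)%N.
Proof.
rewrite /Sle (bigD1 h) //= addnC; congr (_ + _)%N.
by apply: eq_bigl => l; rewrite ltn_neqAle andbC.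
Qed.

Lemma Sle_m h : (Sle h <= m)%N.
Proof. by rewrite /msum (bigID (fun l : 'I_n => (l <= h)%N)) /= leq_addr. Qed.

Lemma Sle_Slt (h1 h2 : 'I_n) : (h1 < h2)%N -> (Sle h1 <= Slt h2)%N.
Proof.
move=> lt; rewrite /Slt (bigID (fun l : 'I_n => (l <= h1)%N)) /=.
rewrite /Sle; apply: leq_trans (leq_addr _ _); apply: eq_leq; apply: eq_bigl => l.
case: (leqP l h1) => H; last by rewrite andbF.
by rewrite andbT (leq_ltn_trans H lt).
Qed.

Lemma block_disj h1 h2 (y : 'I_m) : y \in block k h1 -> y \in block k h2 -> h1 = h2.
Proof.
rewrite !blockE => /andP[a1 b1] /andP[a2 b2].
case: (ltngtP h1 h2) => H; last by apply: val_inj.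
- have := @Sle_Slt _ _ H; lia.
- have := @Sle_Slt _ _ H; lia.
Qed.
Arguments block_disj {h1 h2 y}.

Lemma card_block h : #|block k h| = k h.
Proof.
rewrite -sum1_card.
rewrite (eq_bigl (fun j : 'I_m => (Slt h <= j)%N && (j < Sle h)%N)); last first.
  by move=> j; rewrite blockE.
rewrite -(big_ord_widen_cond _ (fun j => Slt h <= j)%N (fun _ => 1%N) (Sle_m h)).
rewrite (eq_bigl (fun j : 'I_(Sle h) => xpredT j && (Slt h <= j)%N)) //.
rewrite -(big_geq_mkord (Slt h) (Sle h) xpredT (fun _ => 1%N)).
rewrite sum_nat_const_nat SleE. lia.
Qed.

Definition blk (y : 'I_m) : 'I_n := odflt hd [pick h | y \in block k h].

Lemma blkP h y : y \in block k h -> blk y = h.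
Proof.
move=> yh; rewrite /blk; case: pickP => [h' /= yh'|/(_ h)]; last by rewrite yh.
exact: block_disj yh' yh.
Qed.

Arguments blkP {h y}.

Definition fstb (h : 'I_n) : 'I_m := odflt yd [pick y in block k h].

Lemma fstb_in h : fstb h \in block k h.
Proof.
rewrite /fstb; case: pickP => [y //|H].
have : (0 < #|block k h|)%N by rewrite card_block kpos.
by rewrite card_gt0; case/set0Pn => y; rewrite H.
Qed.

Lemma goodE (A : {set 'I_n}) x (tau : {ffun 'I_i -> option 'I_n}) :
  #|A| = i -> x \in A ->
  good_tau A x tau = [&& injectiveb tau,
     [forall s, tau s \in None |: (Some @: (A :\ x))] &
     [forall s : 'I_i, (tau s == None) ==> (i.-2 <= s)%N]].
Proof.
move=> cA xA; rewrite /good_tau.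
case: injectiveP => //= inj; congr (_ && _).
have cT : #|None |: (Some @: (A :\ x))| = i.
  rewrite cardsU1 card_imset; last by move=> ? ? [].
  have -> : None \notin Some @: (A :\ x) by apply/imsetP => -[].
  by have := cardsD1 x A; rewrite xA cA /=.
have cI : #|[set tau p | p : 'I_i]| = i by rewrite card_imset // card_ord.
rewrite eqEcard cT cI leqnn andbT.
apply/subsetP/forallP => [H s|H _ /imsetP[s _ ->] //]; apply: H.
by apply: imset_f.
Qed.

Definition ev (z : 'I_i -> 'I_m) : {ffun 'I_i -> 'rV['F_2]_m} :=
  [ffun s => delta_mx 0 (z s)].

Lemma chiS_delta (B : {set 'I_m}) y : chiS B (delta_mx 0 y) = (y \in B)%:R.
Proof.
rewrite /chiS; case: (boolP (y \in B)) => yB.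
  rewrite (bigD1 y) //= mxE !eqxx big1 ?addr0 // => j /andP[_ jy].
  by rewrite mxE eqxx (negPf jy).
by rewrite big1 // => j jB; rewrite mxE eqxx /=; case: eqP => // ejy; rewrite -ejy jB in yB.
Qed.

Lemma prod_bool (b : 'I_i -> bool) :
  \prod_(s < i) ((b s)%:R : 'F_2) = [forall s, b s]%:R.
Proof.
case: (boolP [forall s, b s]) => [/forallP H|/forallPn[s bs]].
  by rewrite big1 // => s _; rewrite H.
by rewrite (bigD1 s) //= (negPf bs) mul0r.
Qed.


Lemma phi_ev (A' : {set 'I_n}) (y' : 'I_m) (z : 'I_i -> 'I_m) (bz : 'I_i -> 'I_n) :
  #|A'| = i -> blk y' \in A' -> y' \in block k (blk y') ->
  (forall s, z s \in block k (bz s)) -> injective bz ->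
  phi_tilde k i A' (blk y') [set y'] (ev z) =
    ((A' == [set bz s | s : 'I_i]) && [exists s : 'I_i, (z s == y') && (i.-2 <= s)%N])%:R.
Proof.
set x' := blk y' => cA xA yx Hz injb.
have bzE : forall s, z s = y' -> bz s = x'.
  by move=> s e; apply: (block_disj (Hz s)); rewrite e.
rewrite ffunE.
have E : forall tau : {ffun 'I_i -> option 'I_n},
   \prod_(s < i) chiS (lblock k [set y'] (tau s)) (ev z s)
   = [forall s, z s \in lblock k [set y'] (tau s)]%:R.
  by move=> tau; rewrite -prod_bool; apply: eq_bigr => s _; rewrite ffunE chiS_delta.
rewrite (eq_bigr _ (fun tau _ => E tau)).
set ts : {ffun 'I_i -> option 'I_n} := [ffun s => if z s == y' then None else Some (bz s)].
have Huniq : forall tau, good_tau A' x' tau ->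
    [forall s, z s \in lblock k [set y'] (tau s)] -> tau = ts.
  move=> tau; rewrite goodE // => /and3P[_ /forallP Hm _] /forallP Hl.
  apply/ffunP => s; rewrite ffunE; have := Hm s; have := Hl s.
  case: (tau s) => [h|] /=.
    move=> zh; have eh := block_disj zh (Hz s); subst h.
    case: eqP => // e; move: (bzE s e) => ->.
    by rewrite !inE /= => /imsetP[h]; rewrite !inE => /andP[/eqP ne _] [] /esym.
  by rewrite inE => /eqP ->; rewrite eqxx.
have tsok : [forall s, z s \in lblock k [set y'] (ts s)].
  apply/forallP => s; rewrite ffunE; case: eqP => [->|_] /=; first by rewrite inE.
  exact: Hz.
have goodts : good_tau A' x' ts =
   (A' == [set bz s | s : 'I_i]) && [exists s : 'I_i, (z s == y') && (i.-2 <= s)%N].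
  have cI : #|[set bz s | s : 'I_i]| = i by rewrite card_imset // card_ord.
  rewrite goodE //; apply/idP/idP.
    case/and3P => _ /forallP Hm /forallP Hl.
    have sub : [set bz s | s : 'I_i] \subset A'.
      apply/subsetP => _ /imsetP[s _ ->]; have := Hm s; rewrite ffunE.
      case: eqP => [e _|_]; first by rewrite (bzE s e).
      by rewrite !inE /= => /imsetP[h]; rewrite !inE => /andP[_ hA] [->].
    have eA : A' == [set bz s | s : 'I_i] by rewrite eq_sym eqEcard sub cA cI leqnn.
    rewrite eA /=; move/eqP: eA => eA.
    move: (xA); rewrite {1}eA => /imsetP[s0 _ e0].
    apply/existsP; exists s0; have := Hm s0; have := Hl s0; rewrite !ffunE.
    case: (z s0 =P y') => [_ /= -> //|_ _]; rewrite !inE /= => /imsetP[h]; rewrite !inE.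
    by rewrite -e0 => /andP[/eqP ne _] [/esym/ne].
  case/andP => /eqP eA /existsP[s0 /andP[/eqP e0 le0]].
  have bs0 := bzE s0 e0.
  have onlys0 : forall s, z s = y' -> s = s0.
    by move=> s e; apply: injb; rewrite bs0 (bzE s e).
  apply/and3P; split.
  - apply/injectiveP => s1 s2; rewrite !ffunE.
    case: eqP => e1; case: eqP => e2 //.
      by rewrite (onlys0 _ e1) (onlys0 _ e2).
    by case => /injb.
  - apply/forallP => s; rewrite ffunE; case: eqP => e; first by rewrite !inE.
    rewrite !inE /=; apply/imsetP; exists (bz s) => //.
    rewrite !inE eA imset_f // andbT; apply/eqP => ebx.
    by apply: e; have -> : s = s0 by apply: injb; rewrite ebx bs0.
  - apply/forallP => s; rewrite ffunE; case: (z s =P y') => e //=.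
    by rewrite (onlys0 _ e).
case: (boolP (good_tau A' x' ts)) => g.
  rewrite (bigD1 ts) //= tsok big1 ?addr0 -?goodts ?g //.
  move=> tau /andP[gt nt]; case: (boolP [forall s, _]) => // F.
  by rewrite (Huniq _ gt F) eqxx in nt.
rewrite -goodts (negPf g) big1 // => tau gt.
case: (boolP [forall s, _]) => // F.
by move: g; rewrite -(Huniq _ gt F) gt.
Qed.


Lemma F2xx (x : 'F_2) : x + x = 0.
Proof. case: x => -[|[|//]] p; by apply: val_inj. Qed.

Definition sw (a b : 'I_i) (x : 'I_n) (tau : {ffun 'I_i -> option 'I_n}) :
  {ffun 'I_i -> option 'I_n} :=
  [ffun s => if s == a then Some x else if s == b then None else tau s].

Lemma swap_good (A : {set 'I_n}) x tau (a b : 'I_i) :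
  #|A| = i -> x \in A -> a != b -> (i.-2 <= b)%N -> good_tau A x tau -> tau a = None ->
  let h := odflt x (tau b) in
  [/\ h \in A, good_tau A h (sw a b x tau), sw b a h (sw a b x tau) = tau,
      tau b != None & (forall s, odflt h (sw a b x tau s) = odflt x (tau s))].
Proof.
move=> cA xA nab leb g ta h.
move: (g); rewrite goodE // => /and3P[/injectiveP inj /forallP Hm /forallP Hl].
have tb : tau b != None.
  by apply/eqP => tb; move/eqP: nab; apply; apply: inj; rewrite ta tb.
have [h0 eb] : exists h0, tau b = Some h0 by case: (tau b) tb => [h0|//] _; exists h0.
have eh : h = h0 by rewrite /h eb.
have hAx : (h0 \in A) && (h0 != x).
  by have := Hm b; rewrite eb !inE /= => /imsetP[g0]; rewrite !inE => /andP[gx gA] [->]; rewrite gA gx.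
case/andP: hAx => hA hx.
have others : forall s, s != a -> exists2 g0, tau s = Some g0 & (g0 \in A) && (g0 != x).
  move=> s nsa; have := Hm s; rewrite !inE; case E: (tau s) => [g0|].
    by rewrite /= => /imsetP[g1]; rewrite !inE => /andP[gx gA] [->]; exists g1 => //; rewrite gA gx.
  by move/eqP: nsa; case; apply: inj; rewrite E ta.
split.
- by rewrite eh.
- rewrite goodE // ?eh //; apply/and3P; split.
  + apply/injectiveP => s1 s2; rewrite !ffunE.
    case: (s1 =P a) => [->|n1]; case: (s2 =P a) => [->|n2] //.
    * case: (s2 =P b) => // _ /esym ee; have [g0 e1 /andP[_ gx]] := others s2 (introN eqP n2).
      by move: ee; rewrite e1 => -[ee]; rewrite ee eqxx in gx.
    * case: (s1 =P b) => // _ ee; have [g0 e1 /andP[_ gx]] := others s1 (introN eqP n1).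
      by move: ee; rewrite e1 => -[ee]; rewrite ee eqxx in gx.
    * case: (s1 =P b) => [->|m1]; case: (s2 =P b) => [->|m2] //.
      - have [g0 e1 _] := others s2 (introN eqP n2); by rewrite e1.
      - have [g0 e1 _] := others s1 (introN eqP n1); by rewrite e1.
      - by move/inj.
  + apply/forallP => s; rewrite ffunE !inE.
    case: (s =P a) => [_|n1].
      by rewrite /=; apply/imsetP; exists x => //; rewrite !inE xA andbT eq_sym.
    case: (s =P b) => [_|m1]; first by rewrite eqxx.
    have [g0 e1 /andP[gA gx]] := others s (introN eqP n1).
    rewrite e1 /=; apply/imsetP; exists g0 => //; rewrite !inE gA andbT.
    by apply/eqP => eg; apply: m1; apply: inj; rewrite e1 eb eg.
  + apply/forallP => s; rewrite ffunE.
    case: (s =P a) => [_|n1] //; case: (s =P b) => [->|m1] //=.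
- apply/ffunP => s; rewrite !ffunE.
  case: (s =P b) => [->|m1]; first by rewrite eb eh.
  case: (s =P a) => [->|n1]; first by rewrite ta.
  by [].
- exact: tb.
- move=> s; rewrite ffunE.
  case: (s =P a) => [->|n1]; first by rewrite ta.
  case: (s =P b) => [->|m1]; first by rewrite eb eh.
  by have [g0 -> _] := others s (introN eqP n1).
Qed.


Arguments swap_good {A x tau a b}.

Lemma none_pos (A : {set 'I_n}) x tau (a b : 'I_i) :
  val a = i.-2 -> val b = i.-1 ->
  good_tau A x tau -> tau a != None -> tau b = None.
Proof.
move=> va vb /and3P[_ /eqP Him /forallP Hl] ta.
have : None \in [set tau p | p : 'I_i] by rewrite Him !inE.
case/imsetP => s _ es; have := Hl s; rewrite -es eqxx /= => les.
have : (s : nat) = i.-2 \/ (s : nat) = i.-1 by have := ltn_ord s; lia.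
case => e.
  have e' : s = a by apply: val_inj; rewrite /= e va.
  by rewrite -e' -es eqxx in ta.
have e' : s = b by apply: val_inj; rewrite /= e vb.
by rewrite -e'.
Qed.
Arguments none_pos {A x tau a b}.

Lemma relation (A : {set 'I_n}) : #|A| = i ->
  \sum_(x in A) phi_tilde k i A x (block k x) = 0.
Proof.
move=> cA.
have ia : (i.-2 < i)%N by lia.
have ib : (i.-1 < i)%N by lia.
pose a := Ordinal ia; pose b := Ordinal ib.
have nab : a != b by apply/eqP => /(congr1 val) /=; lia.
have nba : b != a by rewrite eq_sym.
have lea : (i.-2 <= a)%N by [].
have leb : (i.-2 <= b)%N by rewrite /=; lia.
apply/ffunP => sg; rewrite sum_ffunE ffunE.
pose G (q : 'I_n * {ffun 'I_i -> option 'I_n}) :=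
  \prod_(s < i) chiS (block k (odflt q.1 (q.2 s))) (sg s).
rewrite (eq_bigr (fun x => \sum_(tau | good_tau A x tau) G (x, tau))); last first.
  move=> x _; rewrite ffunE; apply: eq_bigr => tau _; apply: eq_bigr => s _.
  by case: (tau s).
rewrite pair_big_dep /= (bigID (fun q : 'I_n * {ffun 'I_i -> option 'I_n} => q.2 a == None)) /=.
pose io (q : 'I_n * {ffun 'I_i -> option 'I_n}) :=
  if q.2 a == None then (odflt q.1 (q.2 b), sw a b q.1 q.2)
  else (odflt q.1 (q.2 a), sw b a q.1 q.2).
set S1 := (fun q : 'I_n * {ffun 'I_i -> option 'I_n} =>
   (q.1 \in A) && good_tau A q.1 q.2 && (q.2 a == None)).
set S2 := (fun q : 'I_n * {ffun 'I_i -> option 'I_n} =>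
   (q.1 \in A) && good_tau A q.1 q.2 && ~~ (q.2 a == None)).
have H1 : forall q, S1 q -> [/\ S2 (io q), io (io q) = q & G (io q) = G q].
  case=> x tau /andP[/andP[xA g] /eqP ta].
  have [hA g' back tb od] := swap_good cA xA nab leb g ta.
  rewrite /io /= ta eqxx /=.
  have e1 : sw a b x tau a = Some x by rewrite ffunE eqxx.
  split.
  - by rewrite /S2 /= hA g' e1.
  - by rewrite e1 /= back.
  - by rewrite /G /=; apply: eq_bigr => s _; rewrite od.
have H2 : forall q, S2 q -> [/\ S1 (io q) & io (io q) = q].
  case=> x tau /andP[/andP[xA g] ta].
  have tb := @none_pos _ _ _ a b (erefl _) (erefl _) g ta.
  have [hA g' back _ _] := swap_good cA xA nba lea g tb.
  rewrite /io /= (negPf ta) /=.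
  have e1 : sw b a x tau a = None by rewrite ffunE (negPf nab) eqxx.
  have e2 : sw b a x tau b = Some x by rewrite ffunE eqxx.
  split.
  - by rewrite /S1 /= hA g' e1 eqxx.
  - by rewrite e1 eqxx /= e2 /= back.
rewrite (reindex_onto io io (P := S2)); last by move=> q sq; case: (H2 q sq).
rewrite [X in _ + X](eq_bigl S1); last first.
  move=> q; apply/idP/idP.
    case/andP => s2 /eqP e; have [s1 _] := H2 (io q) s2; by rewrite -e.
  by move=> s1; have [-> -> _] := H1 q s1; rewrite eqxx.
rewrite -big_split /= big1 // => q s1.
by have [_ _ e] := H1 q s1; rewrite -!surjective_pairing e F2xx.
Qed.


Arguments relation {A}.

Lemma phi_lin (A : {set 'I_n}) x (T : {set 'I_m}) :
  phi_tilde k i A x T = \sum_(y in T) phi_tilde k i A x [set y].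
Proof.
apply/ffunP => sg; rewrite sum_ffunE ffunE.
rewrite (eq_bigr (fun y => \sum_(tau | good_tau A x tau)
   \prod_(s < i) chiS (lblock k [set y] (tau s)) (sg s))); last by move=> y _; rewrite ffunE.
rewrite exchange_big /=; apply: eq_bigr => tau /and3P[/injectiveP inj /eqP Him _].
have : None \in [set tau p | p : 'I_i] by rewrite Him !inE.
case/imsetP => s0 _ es0.
have R : forall T', \prod_(s < i | s != s0) chiS (lblock k T' (tau s)) (sg s)
   = \prod_(s < i | s != s0) chiS (lblock k set0 (tau s)) (sg s).
  move=> T'; apply: eq_bigr => s ns; case E: (tau s) => [h|] //.
  by move/eqP: ns; case; apply: inj; rewrite E es0.
rewrite (bigD1 s0) //= R -es0 /=.
rewrite (eq_bigr (fun y => chiS [set y] (sg s0) *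
   \prod_(s < i | s != s0) chiS (lblock k set0 (tau s)) (sg s))); last first.
  by move=> y _; rewrite (bigD1 s0) //= R -es0.
rewrite -mulr_suml; congr (_ * _); rewrite /chiS; apply: eq_bigr => y _.
by rewrite big_set1.
Qed.

Definition a0 (A : {set 'I_n}) : 'I_n := odflt hd [pick h in A].
Definition y0 (A : {set 'I_n}) : 'I_m := fstb (a0 A).
Definition Y (A : {set 'I_n}) : {set 'I_m} :=
  [set y | (blk y \in A) && (y \in block k (blk y))].
Definition Pp := [pred p : {set 'I_n} * 'I_m |
  (#|p.1| == i) && (p.2 \in Y p.1 :\ y0 p.1)].
Definition gen (p : {set 'I_n} * 'I_m) := phi_tilde k i p.1 (blk p.2) [set p.2].
Definition X := [seq gen p | p <- enum Pp].

Lemma YP (A : {set 'I_n}) y : (y \in Y A) = (blk y \in A) && (y \in block k (blk y)).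
Proof. by rewrite [LHS]inE. Qed.

Lemma a0_in (A : {set 'I_n}) : #|A| = i -> a0 A \in A.
Proof.
move=> cA; rewrite /a0; case: pickP => [h //|H].
have : (0 < #|A|)%N by rewrite cA; lia.
by rewrite card_gt0; case/set0Pn => y; rewrite H.
Qed.

Arguments a0_in {A}.

Lemma y0_in (A : {set 'I_n}) : y0 A \in block k (a0 A).
Proof. exact: fstb_in. Qed.

Lemma blk_y0 (A : {set 'I_n}) : blk (y0 A) = a0 A.
Proof. exact: blkP (y0_in A). Qed.

Lemma Y_in (A : {set 'I_n}) y h : h \in A -> y \in block k h -> y \in Y A.
Proof. by move=> hA yh; rewrite inE (blkP yh) hA yh. Qed.

Arguments Y_in {A y h}.

Lemma X_sub : (<<X>> <= Gov_tilde k i)%VS.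
Proof.
apply/span_subvP => _ /mapP[p pin ->]; move: pin; rewrite mem_enum.
case/andP => cA; rewrite in_setD1 => /andP[_]; rewrite inE => /andP[xA yb].
rewrite memvE /Gov_tilde.
apply: (sumv_sup p.1) => //; apply: (sumv_sup (blk p.2)) => //.
apply: (sumv_sup [set p.2]); first by rewrite sub1set.
exact: subvv.
Qed.

Lemma inX (A : {set 'I_n}) x y : #|A| = i -> x \in A -> y \in block k x -> y != y0 A ->
  phi_tilde k i A x [set y] \in <<X>>%VS.
Proof.
move=> cA xA yx yy0; apply: memv_span; apply/mapP; exists (A, y).
  by rewrite mem_enum inE /= cA eqxx /= in_setD1 yy0 (Y_in xA yx).
by rewrite /gen /= (blkP yx).
Qed.

Lemma Gov_sub : (Gov_tilde k i <= <<X>>)%VS.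
Proof.
apply/subv_sumP => A /eqP cA; apply/subv_sumP => x xA; apply/subv_sumP => T sT.
rewrite -memvE.
have blockX : forall x', x' \in A -> x' != a0 A -> phi_tilde k i A x' (block k x') \in <<X>>%VS.
  move=> x' x'A nx'; rewrite phi_lin; apply: rpred_sum => y yb; apply: inX => //.
  by apply/eqP => ey; move: nx'; rewrite -(blkP yb) ey blk_y0 eqxx.
have a0A := a0_in cA.
have a0X : phi_tilde k i (A) (a0 A) (block k (a0 A)) \in <<X>>%VS.
  have := relation cA; rewrite (bigD1 (a0 A)) //= => /eqP; rewrite addr_eq0 => /eqP ->.
  by rewrite rpredN; apply: rpred_sum => x' /andP[x'A nx']; apply: blockX.
have y0X : phi_tilde k i A (a0 A) [set y0 A] \in <<X>>%VS.
  move: a0X; rewrite phi_lin (bigD1 (y0 A)) ?y0_in //= => H.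
  rewrite -(addrK (\sum_(y in block k (a0 A) | y != y0 A) phi_tilde k i A (a0 A) [set y])
      (phi_tilde k i A (a0 A) [set y0 A])).
  apply: rpredB => //; apply: rpred_sum => y /andP[yb ny]; exact: inX.
rewrite phi_lin; apply: rpred_sum => y yT.
have yx : y \in block k x by apply: (subsetP sT).
case: (eqVneq y (y0 A)) => [ey|ny]; last exact: inX.
have ex : x = a0 A by rewrite -(blkP yx) ey blk_y0.
by rewrite ex ey.
Qed.


Lemma test_tuple (A : {set 'I_n}) u v : #|A| = i -> u \in Y A -> v \in Y A ->
  blk u != blk v ->
  exists z : 'I_i -> 'I_m, exists bz : 'I_i -> 'I_n,
    [/\ forall s, z s \in block k (bz s), injective bz,
        [set bz s | s : 'I_i] = A &
        forall y, [exists s : 'I_i, (z s == y) && (i.-2 <= s)%N] = (y == u) || (y == v)].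
Proof.
move=> cA; rewrite !YP => /andP[uA ub] /andP[vA vb] nuv.
set R := enum (A :\ blk u :\ blk v).
have sR : size R = i.-2.
  have c2 : #|A :\ blk u :\ blk v| = i.-2.
    have h1 := cardsD1 (blk u) A; have h2 := cardsD1 (blk v) (A :\ blk u).
    rewrite uA cA in h1; rewrite !inE eq_sym nuv vA /= in h2.
    by rewrite h1 h2 /= ?add0n.
  by rewrite /R -c2 cardE.
have Rin : forall j, (j < i.-2)%N -> [&& nth hd R j != blk v, nth hd R j != blk u & nth hd R j \in A].
  move=> j lj; have : nth hd R j \in R by apply: mem_nth; rewrite sR.
  by rewrite mem_enum !inE.
pose bz (s : 'I_i) := if (s < i.-2)%N then nth hd R s
                      else if (s == i.-2 :> nat) then blk u else blk v.
pose z (s : 'I_i) := if (s < i.-2)%N then fstb (bz s)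
                      else if (s == i.-2 :> nat) then u else v.
have cls : forall s : 'I_i, [\/ (s < i.-2)%N, (s : nat) = i.-2 | (s : nat) = i.-1].
  move=> s; have := ltn_ord s; case: (ltnP s i.-2) => H1 H2; first by constructor 1.
  case: (eqVneq (s : nat) i.-2) => H3; first by constructor 2.
  constructor 3; lia.
have bzL : forall s : 'I_i, (s < i.-2)%N -> bz s = nth hd R s.
  by move=> s H; rewrite /bz H.
have bzU : forall s : 'I_i, (s : nat) = i.-2 -> bz s = blk u.
  by move=> s H; rewrite /bz H ltnn eqxx.
have bzV : forall s : 'I_i, (s : nat) = i.-1 -> bz s = blk v.
  move=> s H; rewrite /bz H.
  have -> : (i.-1 < i.-2)%N = false by lia.
  by have -> : (i.-1 == i.-2) = false by apply/eqP; lia.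
have injb : injective bz.
  move=> s1 s2 e; apply: val_inj.
  case: (cls s1) => c1; case: (cls s2) => c2.
+ move: e; rewrite (bzL _ c1) (bzL _ c2) => /eqP.
    by rewrite nth_uniq ?sR ?enum_uniq // => /eqP.
+ by move: e; rewrite (bzL _ c1) (bzU _ c2) => e; have := Rin _ c1; rewrite e eqxx /= ?andbF.
+ by move: e; rewrite (bzL _ c1) (bzV _ c2) => e; have := Rin _ c1; rewrite e eqxx /= ?andbF.
+ by move: e; rewrite (bzL _ c2) (bzU _ c1) => e; have := Rin _ c2; rewrite -e eqxx /= ?andbF.
+ exact: (etrans c1 (esym c2)).
+ by move: e; rewrite (bzU _ c1) (bzV _ c2) => e; rewrite e eqxx in nuv.
+ by move: e; rewrite (bzL _ c2) (bzV _ c1) => e; have := Rin _ c2; rewrite -e eqxx /= ?andbF.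
+ by move: e; rewrite (bzV _ c1) (bzU _ c2) => e; rewrite e eqxx in nuv.
+ exact: (etrans c1 (esym c2)).
have zU : forall s : 'I_i, (s : nat) = i.-2 -> z s = u.
  by move=> s H; rewrite /z H ltnn eqxx.
have zV : forall s : 'I_i, (s : nat) = i.-1 -> z s = v.
  move=> s H; rewrite /z H.
  have -> : (i.-1 < i.-2)%N = false by lia.
  by have -> : (i.-1 == i.-2) = false by apply/eqP; lia.
exists z, bz; split.
- move=> s; rewrite /z /bz; case: (s < i.-2)%N; first exact: fstb_in.
  by case: (s == i.-2 :> nat).
- exact: injb.
- apply/eqP; rewrite eqEcard cA card_imset // ?card_ord ?leqnn ?andbT.
  apply/subsetP => _ /imsetP[s _ ->]; rewrite /bz.
  case: ifP => [H|_]; first by case/and3P: (Rin _ H).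
  by case: ifP.
- move=> y; apply/existsP/orP.
    case=> s /andP[/eqP e le]; case: (cls s) => c.
    + by move: le; rewrite leqNgt c.
    + by left; rewrite -e (zU _ c).
    + by right; rewrite -e (zV _ c).
  have ia : (i.-2 < i)%N by lia.
  have ib : (i.-1 < i)%N by lia.
  case=> /eqP ->.
    by exists (Ordinal ia); rewrite (zU (Ordinal ia)) // eqxx /=.
  by exists (Ordinal ib); rewrite (zV (Ordinal ib)) // eqxx /=; lia.
Qed.

Arguments test_tuple {A u v}.

Lemma free_fin (K : fieldType) (vT : vectType K) (I : finType) (P : pred I) (g : I -> vT) :
  (forall c : I -> K, \sum_(p | P p) c p *: g p = 0 -> forall p, P p -> c p = 0) ->
  free [seq g p | p <- enum P].
Proof.
move=> H; set r := enum P.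
have -> : [seq g p | p <- r] = map_tuple g (in_tuple r) by [].
apply/freeP => kk Hs j.
pose c (p : I) := if insub (index p r) is Some jj then kk jj else 0.
have cE : forall j0 : 'I_(size r), c (tnth (in_tuple r) j0) = kk j0.
  move=> j0; rewrite /c (tnth_nth (tnth (in_tuple r) j0)) /= index_uniq ?enum_uniq //.
  by rewrite insubT // => Hj; congr kk; apply: val_inj.
have Hc : \sum_(p | P p) c p *: g p = 0.
  rewrite -[RHS]Hs (eq_bigl (fun p => p \in P)) // -big_enum big_tnth.
  apply: eq_bigr => j0 _; rewrite cE; congr (_ *: _).
  by rewrite -tnth_nth tnth_map.
rewrite -cE; apply: (H _ Hc).
by have := mem_tnth j (in_tuple r); rewrite mem_enum.
Qed.

Lemma F2opp (x : 'F_2) : - x = x.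
Proof. by rewrite -[LHS]add0r -(F2xx x) addrK. Qed.

Lemma pick_sum (c' : {set 'I_n} * 'I_m -> 'F_2) q1 q2 :
  \sum_p c' p * ((p == q1)%:R + (p == q2)%:R) = c' q1 + c' q2.
Proof.
rewrite (eq_bigr (fun p => c' p * (p == q1)%:R + c' p * (p == q2)%:R)); last first.
  by move=> p _; rewrite mulrDr.
rewrite big_split /=; congr (_ + _).
  by rewrite (bigD1 q1) //= eqxx mulr1 big1 ?addr0 // => p /negPf ->; rewrite mulr0.
by rewrite (bigD1 q2) //= eqxx mulr1 big1 ?addr0 // => p /negPf ->; rewrite mulr0.
Qed.

Lemma coef_zero (c : {set 'I_n} * 'I_m -> 'F_2) :
  \sum_(p | Pp p) c p *: gen p = 0 -> forall p, Pp p -> c p = 0.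
Proof.
move=> Hs.
pose c' q := if Pp q then c q else 0.
have key : forall (A : {set 'I_n}) u v, #|A| = i -> u \in Y A -> v \in Y A -> blk u != blk v ->
    c' (A, u) = c' (A, v).
  move=> A u v cA uY vY nuv.
  have [z [bz [Hz injb imA exE]]] := test_tuple cA uY vY nuv.
  have uv : u != v by apply: contraNneq nuv => ->.
  have := congr1 (fun f : mlmap m i => f (ev z)) Hs.
  rewrite sum_ffunE ffunE.
  rewrite big_mkcond (eq_bigr (fun p => c' p * ((p == (A,u))%:R + (p == (A,v))%:R))); last first.
    case=> A' y' _; rewrite /c'; case: ifP => PP; last by rewrite mul0r.
    move: (PP); rewrite inE /= => /andP[/eqP cA']; rewrite in_setD1 YP => /and3P[_ bA yb].
    rewrite ffunE /gen /= (phi_ev A' y' z bz cA' bA yb Hz injb) imA exE !xpair_eqE.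
    case: (A' =P A) => _ /=; last by rewrite addr0.
    case: (y' =P u) => [eu|_] /=; last by rewrite add0r.
    by rewrite eu (negPf uv) addr0.
  rewrite pick_sum => /eqP; rewrite addr_eq0 => /eqP ->.
  by rewrite F2opp.
move=> [A y] PP; have cy : c (A, y) = c' (A, y) by rewrite /c' PP.
rewrite cy; move: (PP); rewrite inE /= => /andP[/eqP cA]; rewrite in_setD1 => /andP[yy0 yY].
have y0Y : y0 A \in Y A := Y_in (a0_in cA) (y0_in A).
have c0 : c' (A, y0 A) = 0 by rewrite /c' inE /= in_setD1 eqxx andbF.
case: (eqVneq (blk y) (a0 A)) => e; last by rewrite (key _ _ _ cA yY y0Y) ?blk_y0.
have : (0 < #|A :\ a0 A|)%N.
  by have := cardsD1 (a0 A) A; rewrite (a0_in cA) cA /= add1n => h; move: i2; rewrite h ltnS.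
rewrite card_gt0 => /set0Pn[a1]; rewrite in_setD1 => /andP[na1 a1A].
have y1Y : fstb a1 \in Y A := Y_in a1A (fstb_in a1).
have b1 : blk (fstb a1) = a1 := blkP (fstb_in a1).
rewrite (key _ _ (fstb a1) cA yY y1Y); last by rewrite b1 e eq_sym.
by rewrite (key _ _ _ cA y1Y y0Y) // b1 blk_y0.
Qed.


Lemma dimGov : \dim (Gov_tilde k i) = #|Pp|.
Proof.
have -> : Gov_tilde k i = <<X>>%VS by apply/eqP; rewrite eqEsubv Gov_sub X_sub.
have fX : free X := @free_fin _ _ _ Pp gen coef_zero.
by rewrite (eqP fX) size_map -cardE.
Qed.

Lemma y0Y (A : {set 'I_n}) : #|A| = i -> y0 A \in Y A.
Proof. by move=> cA; apply: Y_in (a0_in cA) (y0_in A). Qed.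

Arguments y0Y {A}.

Lemma cardPp : #|Pp| = (\sum_(A : {set 'I_n} | #|A| == i) (#|Y A| - 1))%N.
Proof.
rewrite -sum1_card.
rewrite (eq_bigl (fun p : {set 'I_n} * 'I_m => (#|p.1| == i) && (p.2 \in Y p.1 :\ y0 p.1))) //.
rewrite -(pair_big_dep (fun A : {set 'I_n} => #|A| == i) (fun A y => y \in Y A :\ y0 A) (fun _ _ => 1%N)) /=.
apply: eq_bigr => A /eqP cA; rewrite sum1_card (cardsD1 (y0 A) (Y A)) (y0Y cA) /=.
by rewrite add1n subn1.
Qed.

Lemma cardY (A : {set 'I_n}) : #|Y A| = (\sum_(x in A) k x)%N.
Proof.
rewrite (eq_bigr (fun x => #|block k x|)) => [|x _]; last by rewrite card_block.
rewrite -sum1_card big_mkcond /=.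
rewrite (eq_bigr (fun x => \sum_y (if y \in block k x then 1 else 0))%N); last first.
  by move=> x _; rewrite -sum1_card big_mkcond.
rewrite exchange_big /=; apply: eq_bigr => y _.
rewrite YP; case: (boolP (y \in block k (blk y))) => yb; last first.
  rewrite andbF big1 // => x _; case: ifP => // yx.
  by rewrite (blkP yx) yx in yb.
rewrite andbT (eq_bigr (fun x => if x == blk y then 1 else 0)%N); last first.
  move=> x _; case: ifP => yx; first by rewrite (blkP yx) eqxx.
  by case: eqP => // ex; rewrite ex yb in yx.
case: (boolP (blk y \in A)) => bA.
  by rewrite (bigD1 (blk y)) //= eqxx big1 ?addn0 // => x /andP[_ /negPf ->].
by rewrite big1 // => x xA; case: eqP => // ex; rewrite -ex xA in bA.
Qed.

Lemma card_contain x :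
  #|[set A : {set 'I_n} | (#|A| == i) && (x \in A)]| = 'C(n.-1, i.-1).
Proof.
have -> : n.-1 = #|[set~ x]| by rewrite cardsC1 card_ord.
rewrite -cards_draws.
set D := [set B : {set 'I_n} | B \subset [set~ x] & #|B| == i.-1].
have nx : forall B, B \in D -> x \notin B.
  move=> B; rewrite inE => /andP[sB _]; apply/negP => xB.
  by have := subsetP sB x xB; rewrite !inE eqxx.
have injD : {in D &, injective (fun B => x |: B)}.
  move=> B1 B2 d1 d2 /= e.
  by rewrite -(setU1K (nx _ d1)) e setU1K // nx.
rewrite -(card_in_imset injD).
suff -> : [set A : {set 'I_n} | (#|A| == i) && (x \in A)] = [set x |: B | B in D] by [].
apply/setP => A; rewrite inE.
apply/andP/imsetP.
  case=> /eqP cA xA; exists (A :\ x); last by rewrite setD1K.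
  rewrite inE; apply/andP; split.
    by apply/subsetP => y; rewrite !inE => /andP[].
  by have := cardsD1 x A; rewrite xA cA => ->.
case=> B dB ->; split; last by rewrite setU11.
rewrite cardsU1 (nx _ dB); move: dB; rewrite inE => /andP[_ /eqP ->].
by rewrite add1n prednK //; lia.
Qed.

Lemma sumY : (\sum_(A : {set 'I_n} | #|A| == i) #|Y A|)%N = (msum k * 'C(n.-1, i.-1))%N.
Proof.
under eq_bigr => A _ do rewrite cardY big_mkcond.
rewrite exchange_big /= /msum big_distrl /=; apply: eq_bigr => x _.
rewrite -big_mkcondr sum_nat_const mulnC -(card_contain x) cardsE.
by [].
Qed.

Lemma main_sec :
  (\dim (Gov_tilde k i))%:Z = ((msum k * 'C(n.-1, i.-1))%:Z - ('C(n, i))%:Z)%R.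
Proof.
rewrite dimGov cardPp.
have e : (\sum_(A : {set 'I_n} | #|A| == i) (#|Y A| - 1) + 'C(n, i))%N = (msum k * 'C(n.-1, i.-1))%N.
  have cN : 'C(n, i) = (\sum_(A : {set 'I_n} | #|A| == i) 1)%N.
    by rewrite sum1_card -cardsE card_draws card_ord.
  rewrite cN -sumY -big_split /=.
  apply: eq_bigr => A /eqP cA; rewrite subnK //.
  by apply/card_gt0P; exists (y0 A); apply: y0Y.
by rewrite -e PoszD addrK.
Qed.

End Main.



Theorem proposition2p6 (n : nat) (k : 'I_n -> nat) (i : nat) :
  (forall l : 'I_n, (0 < k l)%N) -> (2 <= i)%N ->
  (\dim (Gov_tilde k i))%:Z =
    ((msum k * 'C(n.-1, i.-1))%:Z - ('C(n, i))%:Z)%R.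
Proof.
move=> kpos i2.
case: n k kpos => [|n'] k kpos.
  rewrite /Gov_tilde big_pred0; last first.
    move=> A; apply/negP => /eqP cA; have := max_card (mem A).
    by rewrite card_ord cA; lia.
  rewrite dimv0 /msum big_ord0 mul0n bin0n.
  by have -> : (i == 0%N) = false by apply/eqP; lia.
have mpos : (0 < msum k)%N.
  by rewrite /msum (bigD1 ord0) //=; apply: leq_trans (kpos ord0) (leq_addr _ _).
exact: (main_sec _ _ _ kpos i2 ord0 (Ordinal mpos)).
Qed.
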